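(* Let $t_1,\dots,t_n$ be indeterminates and let $C$ be the $n\times n$ matrix with $C_{ii}=0$ and $C_{ij}=\frac{1}{t_i-t_j}$ for $i\ne j$. Then $$\det C=\sum_\pi\prod_{i<j,\ \pi(i)=j}\frac{1}{(t_i-t_j)^2},$$ where the sum is over all perfect matchings $\pi$ of $\{1,\dots,n\}$, i.e. fixed-point-free involutions of $\{1,\dots,n\}$ (the empty sum being $0$ when $n$ is odd). *)

(* Defs.v *)
From mathcomp Require Import all_boot all_order all_algebra all_fingroup.
Set Implicit Arguments. Unset Strict Implicit. Unset Printing Implicit Defensive.
Import GRing.Theory.
Local Open Scope ring_scope.

Definition Cmat (F : fieldType) (n : nat) (t : 'I_n -> F) : 'M[F]_n :=
  \matrix_(i, j) (if i == j then 0 else (t i - t j)^-1).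

Definition perfect_matching (n : nat) (s : 'S_n) : bool :=
  [forall i, (s (s i) == i) && (s i != i)].

(* Main.v *)
Require Import Defs.
From mathcomp Require Import all_boot all_order all_algebra all_fingroup.
From mathcomp Require Import ring.
Set Implicit Arguments. Unset Strict Implicit. Unset Printing Implicit Defensive.
Import GRing.Theory.
Local Open Scope ring_scope.

Lemma inv_sign n (s : 'S_n) : (forall i, s (s i) = i) ->
  odd_perm s = odd #|[pred i : 'I_n | (i < s i)%N]|.
Proof.
move Em: #|_| => m; elim: m s Em => [|m IH] s Em sinv.
  have -> : s = 1%g.
    apply/permP => i; rewrite perm1; apply/eqP; apply/negPn/negP => hne.
    case: (ltngtP i (s i)) => h.
    - by move/eqP: Em; apply/negP; rewrite -lt0n; apply/card_gt0P; exists i.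
    - move/eqP: Em; apply/negP; rewrite -lt0n; apply/card_gt0P; exists (s i).
      by rewrite inE sinv.
    - by move/val_inj: h => h; rewrite -h eqxx in hne.
  by rewrite odd_perm1.
have : (0 < #|[pred i : 'I_n | (i < s i)%N]|)%N by rewrite Em.
case/card_gt0P => i; rewrite inE => hi.
have nei : i != s i by rewrite neq_ltn hi.
set s' := (tperm i (s i) * s)%g.
have s'E : forall x, s' x = if x == i then i else if x == s i then s i else s x.
  move=> x; rewrite permM; case: tpermP => [->|->|].
  - by rewrite eqxx.
  - by rewrite eqxx; move: nei; rewrite eq_sym => /negPf ->.
  - by move=> /eqP/negPf -> /eqP/negPf ->.
have nei' : (s i == i) = false by apply/negbTE; rewrite eq_sym.
have s'i : s' i = i by rewrite s'E eqxx.
have s'si : s' (s i) = s i by rewrite s'E nei' eqxx.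
have s'inv : forall x, s' (s' x) = x.
  move=> x; case: (x =P i) => [->|hxi]; first by rewrite !s'i.
  case: (x =P s i) => [->|hx]; first by rewrite !s'si.
  have h1 : (s x == i) = false.
    by apply/negP => /eqP h; apply: hx; rewrite -h sinv.
  have h2 : (s x == s i) = false.
    by apply/negP => /eqP /perm_inj h; apply: hxi.
  rewrite (s'E x); move/eqP/negPf: hxi => ->; move/eqP/negPf: hx => ->.
  by rewrite s'E h1 h2 sinv.
have cardE : #|[pred j : 'I_n | (j < s' j)%N]| = m.
  have : #|[pred j : 'I_n | (j < s j)%N]| = #|[pred j : 'I_n | (j < s' j)%N]|.+1.
    rewrite (cardD1 i) inE hi /= add1n; congr _.+1; apply: eq_card => j.
    rewrite !inE s'E; case: (j =P i) => [->|_] //=; first by rewrite ltnn.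
    case: (j =P s i) => [->|_] //=; first by rewrite ltnn sinv ltnNge ltnW.
  by rewrite Em => -[].
have := IH s' cardE s'inv.
rewrite /s' odd_permM odd_tperm nei /= => <-.
by rewrite negbK.
Qed.

Definition wt (F : fieldType) n (t : 'I_n -> F) (s : 'S_n) : F :=
  (-1) ^+ s * \prod_i Cmat t i (s i).

Lemma Ce (F : fieldType) n (t : 'I_n -> F) i j :
  Cmat t i j = if i == j then 0 else (t i - t j)^-1.
Proof. by rewrite mxE. Qed.

Lemma key_alg (F : fieldType) n (t : 'I_n -> F) (t_inj : injective t) (x y z : 'I_n) :
  y != x -> z != x -> z != y ->
  Cmat t y x * Cmat t x z = Cmat t y z * (Cmat t y x - Cmat t z x).
Proof.
move=> yx zx zy.
have e1 : (y == x) = false by apply/negbTE.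
have e2 : (x == z) = false by apply/negbTE; rewrite eq_sym.
have e3 : (y == z) = false by apply/negbTE; rewrite eq_sym.
have e4 : (z == x) = false by apply/negbTE.
rewrite !Ce e1 e2 e3 e4.
have h1 : t y - t x != 0 by rewrite subr_eq0 (inj_eq t_inj).
have h2 : t x - t z != 0 by rewrite subr_eq0 (inj_eq t_inj) eq_sym.
have h3 : t y - t z != 0 by rewrite subr_eq0 (inj_eq t_inj) eq_sym.
have h4 : t z - t x != 0 by rewrite subr_eq0 (inj_eq t_inj).
by field; rewrite h1 h2 h3 h4.
Qed.

Lemma wt_ins (F : fieldType) n (t : 'I_n -> F) (t_inj : injective t) (x y : 'I_n) (s' : 'S_n) :
  s' x = x -> y != x -> s' y != y ->
  wt t (tperm x y * s')%g =
  - ((-1) ^+ s' * \prod_(i | i != x) Cmat t i (s' i)) *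
      (Cmat t y x - Cmat t (s' y) x).
Proof.
move=> sx yx sy.
have zx : s' y != x by apply: contra yx => /eqP h; apply/eqP; apply: (@perm_inj _ s'); rewrite h sx.
rewrite /wt odd_permM odd_tperm eq_sym yx signr_addb expr1.
rewrite (bigD1 x) //= (bigD1 y) //= [in RHS](bigD1 y) //=.
rewrite !permM tpermL tpermR sx.
rewrite (eq_bigr (fun i => Cmat t i (s' i))); last first.
  by move=> i /andP[ix iy]; rewrite permM tpermD // eq_sym.
set R := \prod_(i | _) _.
have K := key_alg t_inj yx zx (negbT (negbTE sy)).
set a := Cmat t x (s' y); set b := Cmat t y x; set c := Cmat t y (s' y).
set d := Cmat t (s' y) x; set e := (-1) ^+ odd_perm s'.
rewrite mulN1r mulrA [a * b]mulrC K.
by rewrite !mulNr !mulrA -[e * c * R * _]mulrA [R * _]mulrC !mulrA.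
Qed.

Definition Pk n k (s : 'S_n) := [forall i : 'I_n, (i < k)%N ==> (s (s i) == i)].
Definition Y2 n (x : 'I_n) (s : 'S_n) (y : 'I_n) :=
  [&& y != x, s y != y, (x <= y)%N & (x <= s y)%N].

Lemma PkP n k (s : 'S_n) :
  reflect (forall i : 'I_n, (i < k)%N -> s (s i) = i) (Pk k s).
Proof.
apply: (iffP forallP) => h i.
  by move=> hi; apply/eqP; exact: (implyP (h i)).
by apply/implyP => hi; apply/eqP/h.
Qed.

Lemma cond_eq n (x y : 'I_n) (s' : 'S_n) : s' x = x ->
  Pk x (tperm x y * s')%g && ((tperm x y * s')%g ((tperm x y * s')%g x) != x)
  = Pk x s' && Y2 x s' y.
Proof.
move=> s'x; set s := (tperm x y * s')%g.
have sx : s x = s' y by rewrite permM tpermL.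
have sy : s y = s' x by rewrite permM tpermR.
have so : forall u, u != x -> u != y -> s u = s' u.
  by move=> u ux uy; rewrite permM tpermD // eq_sym.
have ltx : forall i : 'I_n, (i < x)%N -> i != x.
  by move=> i hi; apply/eqP => h; rewrite h ltnn in hi.
apply/idP/idP.
- case/andP => /PkP Ps ssx.
  have yx : y != x.
    apply/eqP => h; move: ssx; rewrite sx h s'x -{2}s'x -h -sx.
    by rewrite h sx h s'x eqxx.
  have sy' : s' y != y.
    apply/eqP => h; move: ssx; by rewrite sx h sy s'x eqxx.
  have zx : s' y != x.
    by apply: contra yx => /eqP h; apply/eqP; apply: (@perm_inj _ s'); rewrite h s'x.
  have ky : (x <= y)%N.
    rewrite leqNgt; apply/negP => hy; have := Ps y hy.
    by rewrite sy s'x sx => /eqP; rewrite (negPf sy').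
  have kz : (x <= s' y)%N.
    rewrite leqNgt; apply/negP => hz; have := Ps _ hz.
    rewrite (so _ zx sy').
    have [h|ux] := eqVneq (s' (s' y)) x.
      have : s' (s' y) = s' x by rewrite s'x.
      by move/perm_inj => h'; rewrite h' eqxx in zx.
    have [h|uy] := eqVneq (s' (s' y)) y.
      by rewrite h sy s'x => /eqP; rewrite eq_sym (negPf zx).
    rewrite (so _ ux uy) => /perm_inj h.
    by rewrite h eqxx in uy.
  apply/andP; split; last by rewrite /Y2 yx sy' ky kz.
  apply/PkP => i hi.
  have ix := ltx i hi.
  have iy : i != y by apply/eqP => h; move: hi; rewrite h ltnNge ky. 
  have := Ps i hi; rewrite (so _ ix iy).
  have jx : s' i != x.
    by apply: contra ix => /eqP h; apply/eqP; apply: (@perm_inj _ s'); rewrite h s'x.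
  have [->|jy] := eqVneq (s' i) y; first by rewrite sy s'x => h; rewrite h eqxx in ix.
  by rewrite (so _ jx jy).
- case/andP => /PkP Ps /and4P[yx sy' ky kz].
  have zx : s' y != x.
    by apply: contra yx => /eqP h; apply/eqP; apply: (@perm_inj _ s'); rewrite h s'x.
  apply/andP; split.
    apply/PkP => i hi.
    have ix := ltx i hi.
    have iy : i != y by apply/eqP => h; move: hi; rewrite h ltnNge ky.
    have jx : s' i != x.
      by apply: contra ix => /eqP h; apply/eqP; apply: (@perm_inj _ s'); rewrite h s'x.
    have jy : s' i != y.
      apply/eqP => h; have := Ps i hi; rewrite h => h'.
      by move: hi; rewrite -h' ltnNge kz.
    by rewrite (so _ ix iy) (so _ jx jy) Ps.
  rewrite sx (so _ zx sy').
  by apply: contra zx => /eqP h; apply/eqP; apply: (@perm_inj _ s'); rewrite h s'x.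
Qed.

Lemma Y2_s n (x : 'I_n) (s : 'S_n) v : s x = x -> Pk x s -> Y2 x s (s v) = Y2 x s v.
Proof.
move=> sx /PkP Ps; rewrite /Y2.
have inj1 : forall a b, (s a == s b) = (a == b) by move=> a b; apply: (inj_eq (@perm_inj _ s)).
apply/idP/idP.
- case/and4P => h1 h2 h3 h4.
  have vx : v != x by apply: contra h1 => /eqP ->; rewrite sx.
  have svv : s v != v by move: h2; rewrite inj1.
  have xv : (x <= v)%N.
    rewrite leqNgt; apply/negP => hv; have := Ps v hv => e.
    by move: h4; rewrite e leqNgt hv.
  by rewrite vx svv xv h3.
- case/and4P => h1 h2 h3 h4.
  have e1 : s v != x by rewrite -{1}sx inj1.
  have e2 : s (s v) != s v by rewrite inj1.
  have e3 : (x <= s (s v))%N.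
    rewrite leqNgt; apply/negP => hv; have := Ps _ hv.
    move/perm_inj/perm_inj => e.
    by move: h3; rewrite -e leqNgt hv.
  by rewrite e1 e2 h4 e3.
Qed.

Lemma step_zero (F : fieldType) n (t : 'I_n -> F) (t_inj : injective t) (x : 'I_n) :
  \sum_(s : 'S_n | Pk x s && (s (s x) != x)) wt t s = 0.
Proof.
rewrite (eq_bigr (fun s : 'S_n => \sum_(y | s y == x) wt t s)); last first.
  move=> s _; rewrite (big_pred1 ((s^-1)%g x)) // => y /=.
  by rewrite -{1}(permKV s x) (inj_eq (@perm_inj _ s)).
rewrite (exchange_big_dep xpredT) //=.
rewrite (eq_bigr (fun y => \sum_(s' | (Pk x (tperm x y * s')%g &&
    ((tperm x y * s')%g ((tperm x y * s')%g x) != x)) && ((tperm x y * s')%g y == x))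
    wt t (tperm x y * s')%g)); last first.
  by move=> y _; apply: (reindex_inj (mulgI (tperm x y))).
rewrite (exchange_big_dep xpredT) //=.
apply: big1 => s' _.
have [s'x|s'x] := eqVneq (s' x) x; last first.
  by apply: big_pred0 => y; rewrite (permM (tperm x y) s' y) tpermR (negPf s'x) andbF.
rewrite (eq_bigl (fun y => Pk x s' && Y2 x s' y)); last first.
  by move=> y; rewrite (permM (tperm x y) s' y) tpermR s'x eqxx andbT cond_eq.
have [Pks|nPks] := boolP (Pk x s'); last first.
  by apply: big_pred0.
rewrite (eq_bigr (fun y => - ((-1) ^+ s' * \prod_(i | i != x) Cmat t i (s' i)) *
      (Cmat t y x - Cmat t (s' y) x))); last first.
  by move=> y /andP[_ /and4P[yx sy _ _]]; apply: wt_ins.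
rewrite -big_distrr /= sumrB.
rewrite [X in _ - X](reindex_inj (@perm_inj _ (s'^-1)%g)) /=.
rewrite [X in _ - X](eq_big (fun y => Y2 x s' y) (fun y => Cmat t y x)).
- by rewrite subrr mulr0.
- by move=> y; rewrite -{2}(permKV s' y) Y2_s.
- by move=> y _; rewrite permKV.
Qed.

Lemma iterP (F : fieldType) n (t : 'I_n -> F) (t_inj : injective t) k :
  (k <= n)%N -> \sum_(s : 'S_n) wt t s = \sum_(s | Pk k s) wt t s.
Proof.
elim: k => [_|k IH hk].
  by apply: eq_bigl => s; symmetry; apply/forallP => i; rewrite ltn0.
rewrite IH; last exact: ltnW.
set x := Ordinal hk.
rewrite (bigID (fun s : 'S_n => s (s x) == x)) /=.
have := step_zero t_inj x; rewrite /= => ->; rewrite addr0.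
apply: eq_bigl => s; apply/andP/PkP => [[/PkP Ps /eqP e] i hi | Ps].
  move: hi; rewrite ltnS leq_eqVlt => /orP[/eqP hi|hi]; last exact: Ps.
  by have -> : i = x by apply: val_inj.
split; first by apply/PkP => i hi; apply: Ps; apply: ltnW.
by apply/eqP; apply: Ps => /=.
Qed.

Lemma wt_pm (F : fieldType) n (t : 'I_n -> F) (s : 'S_n) : perfect_matching s ->
  wt t s = \prod_(i : 'I_n | (i < s i)%N) ((t i - t (s i)) ^+ 2)^-1.
Proof.
move/forallP => h.
have sinv i : s (s i) = i by case/andP: (h i) => /eqP.
have sne i : s i != i by case/andP: (h i).
rewrite /wt (bigID (fun i : 'I_n => (i < s i)%N)) /=.
rewrite [X in _ * (_ * X)](reindex_inj (@perm_inj _ s)) /=.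
rewrite [X in _ * (_ * X)](eq_big (fun j : 'I_n => (j < s j)%N) (fun j => - Cmat t j (s j))).
- rewrite prodrN (inv_sign sinv) signr_odd mulrCA signrMK -big_split /=.
  apply: eq_bigr => i _; rewrite Ce eq_sym (negPf (sne i)) -expr2 exprVn //.
- move=> j; rewrite sinv -leqNgt leq_eqVlt.
  have -> : (nat_of_ord j == nat_of_ord (s j)) = false.
    by apply/negbTE; rewrite eq_sym; exact: (sne j).
  by [].
- move=> j _; rewrite sinv !Ce (negPf (sne j)) eq_sym (negPf (sne j)).
  by rewrite -invrN opprB.
Qed.

Theorem mainTheorem19 (F : fieldType) (n : nat) (t : 'I_n -> F)
  (t_inj : injective t) :
  \det (Cmat t) =
  \sum_(s : 'S_n | perfect_matching s)
     \prod_(i : 'I_n | (i < s i)%N) ((t i - t (s i)) ^+ 2)^-1.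
Proof.
have -> : \det (Cmat t) = \sum_(s : 'S_n) wt t s by [].
rewrite (iterP t_inj (leqnn n)) (bigID (@perfect_matching n)) /=.
rewrite [X in _ + X]big1 ?addr0; last first.
  move=> s /andP[/PkP Ps /forallPn [i]].
  rewrite negb_and negbK (Ps i (ltn_ord i)) eqxx /= => /eqP si.
  by rewrite /wt (bigD1 i) //= Ce si eqxx mul0r mulr0.
apply: eq_big => s.
  apply/andP/idP => [[]//|pm]; split=> //; apply/PkP => i _.
  by move/forallP: pm => /(_ i) /andP[/eqP].
by move=> /andP[_ pm]; apply: wt_pm.
Qed.
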